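(* Let $\mathcal T$ be an orbital category and $\mathcal F$ a $\mathcal T$-family. The preimage of $\{\mathcal F\}$ under $c:\mathrm{wIndSys}_{\mathcal T}\to\mathrm{Fam}_{\mathcal T}$ is exactly the image of the restriction of $E^{\mathcal T}_{\mathcal F}$ to one-color $\mathcal F$-weak indexing systems.
   Context: For a small category $\mathcal T$, $\mathbb F_{\mathcal T}$ is the full subcategory of $\mathrm{Fun}(\mathcal T^{op},\mathrm{Set})$ on finite coproducts of representables; $\mathcal T$ is orbital if $\mathbb F_{\mathcal T}$ has pullbacks. $\mathbb F_V:=\mathbb F_{\mathcal T,/V}$, $*_V$ terminal; for $U\to V$, $\mathrm{Res}^V_U$ is pullback and $\mathrm{Ind}^V_U$ postcomposition. A full $\mathcal T$-subcategory $\mathcal C$ assigns isomorphism-closed classes $\mathcal C_V\subseteq\mathrm{Ob}\,\mathbb F_V$ stable under all restrictions. For $S\in\mathbb F_V$ with orbits $U\in\mathrm{Orb}(S)$ and $T_U\in\mathbb F_U$, $\coprod_U^ST_U:=\coprod_U\mathrm{Ind}_U^VT_U$. A $\mathcal T$-weak indexing system is a full $\mathcal T$-subcategory $\mathcal C$ with $\mathcal C_V\neq\emptyset\Rightarrow *_V\in\mathcal C_V$ and closed under $\coprod^S_U T_U$ for $S\in\mathcal C_V$, $T_U\in\mathcal C_U$; it has one color if all $\mathcal C_V$ are nonempty. $\mathrm{wIndSys}_{\mathcal T}$ is their poset under inclusion. A $\mathcal T$-family is a full subcategory $\mathcal F$ such that $V\to W$ with $W\in\mathcal F$ implies $V\in\mathcal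 F$; $\mathrm{Fam}_{\mathcal T}$ is their poset. A $\mathcal T$-family $\mathcal F$ is itself orbital (with $\mathbb F_{\mathcal F,/V}=\mathbb F_V$ for $V\in\mathcal F$), so $\mathcal F$-weak indexing systems are defined. $c(\mathcal C)=\{V\mid *_V\in\mathcal C_V\}$. For an $\mathcal F$-weak indexing system $\mathcal C$, $E^{\mathcal T}_{\mathcal F}\mathcal C$ is the $\mathcal T$-weak indexing system with $(E^{\mathcal T}_{\mathcal F}\mathcal C)_V=\mathcal C_V$ for $V\in\mathcal F$ and $=\emptyset$ otherwise. *)

(* Defs.v *)
From mathcomp Require Import ssreflect ssrfun ssrbool eqtype ssrnat seq choice fintype.
Set Implicit Arguments.
Unset Strict Implicit.
Unset Printing Implicit Defensive.

Record smallcat := MkCat {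
  ob :> Type;
  hom : ob -> ob -> Type;
  idm : forall a, hom a a;
  comp : forall {a b c}, hom b c -> hom a b -> hom a c;
  comp_idl : forall a b (f : hom a b), comp (idm b) f = f;
  comp_idr : forall a b (f : hom a b), comp f (idm a) = f;
  comp_assoc : forall a b c d (h : hom c d) (g : hom b c) (f : hom a b),
      comp h (comp g f) = comp (comp h g) f }.

Arguments hom {c} _ _ : rename.
Arguments idm {c} a : rename.
Arguments comp {c a b c0} _ _ : rename.

Section FT.
Variable T : smallcat.

(** By Yoneda, the full subcategory of presheaves on finite coproducts of
    representables is the free finite-coproduct completion of T:
    an object is a finite family (U_i)_{i in I} of objects of T
    (representing the coproduct of the representables y(U_i)), and a
    morphism  coprod_i y(U_i) -> coprod_j y(V_j)  is, for each i, a choice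
    of j together with a morphism U_i -> V_j. *)
Record fobj := FObj { fidx : finType; orb : fidx -> ob T }.
Arguments orb : clear implicits.

Definition fhom (S S' : fobj) :=
  forall i : fidx S, {j : fidx S' & hom (orb S i) (orb S' j)}.

Definition fid (S : fobj) : fhom S S := fun i => existT _ i (idm _).
Arguments fid : clear implicits.

Definition fcomp (A B D : fobj) (g : fhom B D) (f : fhom A B) : fhom A D :=
  fun i => existT _ (projT1 (g (projT1 (f i))))
                    (comp (projT2 (g (projT1 (f i)))) (projT2 (f i))).

Definition rep (V : ob T) : fobj := @FObj unit (fun _ => V).
Definition rep_map (U V : ob T) (u : hom U V) : fhom (rep U) (rep V) :=
  fun _ => existT _ tt u.

Definition fcoprod (I : finType) (X : I -> fobj) : fobj :=
  @FObj {i : I & fidx (X i)} (fun p => orb (X (projT1 p)) (projT2 p)).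

Definition is_pullback (A B D P : fobj) (f : fhom A D) (g : fhom B D)
    (p1 : fhom P A) (p2 : fhom P B) : Prop :=
  fcomp f p1 = fcomp g p2 /\
  forall (Q : fobj) (q1 : fhom Q A) (q2 : fhom Q B),
    fcomp f q1 = fcomp g q2 ->
    exists h : fhom Q P,
      (fcomp p1 h = q1 /\ fcomp p2 h = q2) /\
      forall h' : fhom Q P, fcomp p1 h' = q1 -> fcomp p2 h' = q2 -> h' = h.

Definition orbital : Prop :=
  forall (A B D : fobj) (f : fhom A D) (g : fhom B D),
    exists (P : fobj) (p1 : fhom P A) (p2 : fhom P B), is_pullback f g p1 p2.

Record sobj (V : ob T) := SObj { sdom : fobj; smap : fhom sdom (rep V) }.
Arguments smap {V} s _.
Arguments sdom {V} s.

Definition sterm (V : ob T) : sobj V := @SObj V (rep V) (fid (rep V)).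

Definition siso (V : ob T) (S S' : sobj V) : Prop :=
  exists (h : fhom (sdom S) (sdom S')) (k : fhom (sdom S') (sdom S)),
    [/\ fcomp k h = fid _, fcomp h k = fid _ & fcomp (smap S') h = smap S].

Definition sind (U V : ob T) (u : hom U V) (X : sobj U) : sobj V :=
  @SObj V (sdom X) (fcomp (rep_map u) (smap X)).

Definition scoprod (V : ob T) (I : finType) (X : I -> sobj V) : sobj V :=
  @SObj V (fcoprod (fun i => sdom (X i)))
        (fun p => smap (X (projT1 p)) (projT2 p)).

(** the orbits of S in F_V: the summands U_i of S, with their maps U_i -> V *)
Definition orbit_map (V : ob T) (S : sobj V) (i : fidx (sdom S)) :
  hom (orb (sdom S) i) V := projT2 (smap S i).

Definition scoprodS (V : ob T) (S : sobj V)
    (X : forall i : fidx (sdom S), sobj (orb (sdom S) i)) : sobj V :=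
  scoprod (fun i => sind (orbit_map i) (X i)).

Definition classes := forall V : ob T, sobj V -> Prop.

Definition iso_closed (C : classes) : Prop :=
  forall V (S S' : sobj V), siso S S' -> C V S -> C V S'.

(** stability under Res^V_U (pullback along U -> V); any choice of pullback *)
Definition res_stable (C : classes) : Prop :=
  forall (U V : ob T) (u : hom U V) (S : sobj V)
         (P : fobj) (p1 : fhom P (rep U)) (p2 : fhom P (sdom S)),
    is_pullback (rep_map u) (smap S) p1 p2 -> C V S -> C U (SObj p1).

Definition full_subcat (C : classes) : Prop := iso_closed C /\ res_stable C.

Definition is_wIndSys (C : classes) : Prop :=
  [/\ full_subcat C,
      (forall V, (exists S, C V S) -> C V (sterm V)) &
      (forall V (S : sobj V)
              (X : forall i : fidx (sdom S), sobj (orb (sdom S) i)),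
          C V S -> (forall i, C _ (X i)) -> C V (scoprodS X))].

Definition one_color (C : classes) : Prop := forall V, exists S, C V S.

Definition colors (C : classes) : ob T -> Prop := fun V => C V (sterm V).

Definition is_family (F : ob T -> Prop) : Prop :=
  forall (V W : ob T), hom V W -> F W -> F V.

End FT.

Arguments sterm {T} V.
Arguments orb {T} f _.
Arguments fid {T} S _.
Arguments smap {T V} s _.
Arguments sdom {T V} s.
Arguments SObj {T V sdom}.

Section Sub.
Variables (T : smallcat) (F : ob T -> Prop).

Definition subcat : smallcat :=
  @MkCat {V : ob T | F V} (fun a b => hom (sval a) (sval b))
       (fun a => idm (sval a)) (fun a b c g f => comp g f)
       (fun a b f => comp_idl f) (fun a b f => comp_idr f)
       (fun a b c d h g f => comp_assoc h g f).

Definition embed_fobj (S : fobj subcat) : fobj T :=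
  @FObj T (fidx S) (fun i => sval (orb S i)).

Definition embed_sobj (V : ob subcat) (S : sobj V) : sobj (sval V) :=
  @SObj T (sval V) (embed_fobj (sdom S)) (smap S).

Definition extE (C : classes subcat) : classes T :=
  fun V S => exists (hV : F V) (S' : @sobj subcat (exist F V hV)),
      @C (exist F V hV) S' /\ siso (embed_sobj S') S.

End Sub.

(* Main.v *)
Require Import Defs.
From mathcomp Require Import ssreflect ssrfun ssrbool eqtype ssrnat seq choice fintype.
From Stdlib Require Import FunctionalExtensionality ProofIrrelevance.
Set Implicit Arguments.
Unset Strict Implicit.

Section L.
Variable T : smallcat.

Lemma fcomp_idl (A B : fobj T) (f : fhom A B) : fcomp (fid B) f = f.
Proof.
apply: functional_extensionality_dep => i; rewrite /fcomp /fid /=.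
rewrite comp_idl; by case: (f i).
Qed.

Lemma fcomp_idr (A B : fobj T) (f : fhom A B) : fcomp f (fid A) = f.
Proof.
apply: functional_extensionality_dep => i; rewrite /fcomp /fid /=.
rewrite comp_idr; by case: (f i).
Qed.

Lemma fcompA (A B D E : fobj T) (h : fhom D E) (g : fhom B D) (f : fhom A B) :
  fcomp h (fcomp g f) = fcomp (fcomp h g) f.
Proof.
apply: functional_extensionality_dep => i; rewrite /fcomp /=.
by rewrite comp_assoc.
Qed.

Arguments fcompA {A B D E} h g f.

Lemma siso_refl (V : T) (S : sobj V) : siso S S.
Proof. exists (fid _), (fid _); split; by rewrite ?fcomp_idl ?fcomp_idr. Qed.

Lemma siso_trans (V : T) (S1 S2 S3 : sobj V) : siso S1 S2 -> siso S2 S3 -> siso S1 S3.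
Proof.
move=> [h1 [k1 [e1 e1' m1]]] [h2 [k2 [e2 e2' m2]]].
exists (fcomp h2 h1), (fcomp k1 k2); split.
- by rewrite -fcompA (fcompA k2) e2 fcomp_idl e1.
- by rewrite -fcompA (fcompA h1) e1' fcomp_idl e2'.
- by rewrite fcompA m2.
Qed.
End L.

Section M.
Variables (T : smallcat) (F : ob T -> Prop) (HF : is_family F).

Definition lift_fobj (A : fobj T) (pf : forall i, F (orb A i)) : fobj (subcat F) :=
  @FObj (subcat F) (fidx A) (fun i => exist F (orb A i) (pf i)).

Definition lift_sobj (V : T) (hV : F V) (S : sobj V) : sobj (T:=subcat F) (exist F V hV) :=
  @SObj (subcat F) (exist F V hV)
    (@lift_fobj (sdom S) (fun i => HF (projT2 (smap S i)) hV)) (smap S).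

Lemma siso_lift (V : T) (hV : F V) (S : sobj V) : siso S (embed_sobj (@lift_sobj V hV S)).
Proof. exact (@siso_refl T V S). Qed.


Section W.
Variable C' : classes (subcat F).
Hypothesis Ciso : iso_closed C'.

Lemma extE_lift (V : T) (S : sobj V) : extE C' S -> exists hV, C' (@lift_sobj V hV S).
Proof.
move=> [hV [S' [c e]]]; exists hV; apply: (Ciso _ c); exact e.
Qed.

Lemma extE_of_lift (V : T) hV (S : sobj V) : C' (@lift_sobj V hV S) -> extE C' S.
Proof.
move=> c; exists hV, (@lift_sobj V hV S); split => //; exact (siso_refl S).
Qed.
End W.

Lemma ext_wind (C' : classes (subcat F)) :
  is_wIndSys C' -> one_color C' -> is_wIndSys (extE C').
Proof.
move=> [[Ciso Cres] Cterm Ccop] Cone; split.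
- split.
  + move=> V S1 S2 hiso [hV [S' [c e]]]; exists hV, S'; split => //.
    exact: siso_trans e hiso.
  + move=> U V u S P p1 p2 pb /(extE_lift Ciso) [hV cS].
    have hU := HF u hV.
    apply (@extE_of_lift C' U hU).
    apply: (Cres (exist F U hU) (exist F V hV) u (lift_sobj hV S)
              (@lift_fobj P (fun i => HF (projT2 (p1 i)) hU)) p1 p2 _ cS).
    case: pb => eq univ; split; first exact eq.
    move=> Q q1 q2 eq'.
    have [h [[h1 h2] hu]] := univ (embed_fobj Q) q1 q2 eq'.
    exists h; split; first by split.
    move=> h'; exact (hu h').
- move=> V [S /(extE_lift Ciso) [hV _]].
  have [S0 c0] := Cone (exist F V hV).
  exists hV, (@sterm (subcat F) (exist F V hV)); split.
  + apply: Cterm; by exists S0.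
  + exact (siso_refl (sterm V)).
- move=> V S X /(extE_lift Ciso) [hV cS] cX.
  pose pf i := HF (projT2 (smap S i)) hV.
  have cX' : forall i, C' _ (lift_sobj (pf i) (X i)).
    move=> i; case: (cX i) => hUi [X' [c e]].
    have E : pf i = hUi by apply: proof_irrelevance.
    destruct E.
    apply: (Ciso _ _ _ _ c); exact e.
  apply (@extE_of_lift C' V hV).
  have := Ccop _ (lift_sobj hV S) (fun i => lift_sobj (pf i) (X i)) cS cX'.
  apply: Ciso.
  exact (siso_refl (scoprodS X)).
Qed.

Lemma part2_fwd (C : classes T) : is_wIndSys C -> (forall V, colors C V <-> F V) ->
  exists C' : classes (subcat F),
    [/\ is_wIndSys C', one_color C' & forall V (S : sobj V), C V S <-> extE C' S].
Proof.
move=> [[Ciso Cres] Cterm Ccop] hc.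
exists (fun W S => C (sval W) (embed_sobj S)); split.
- split; [split| |].
  + move=> W S1 S2 hiso c; exact (Ciso (sval W) (embed_sobj S1) (embed_sobj S2) hiso c).
  + move=> U V u S P p1 p2 pb c.
    apply: (Cres (sval U) (sval V) u (embed_sobj S) (embed_fobj P) p1 p2 _ c).
    case: pb => eq univ; split; first exact eq.
    move=> Q q1 q2 eq'.
    have [h [[h1 h2] hu]] :=
      univ (@lift_fobj Q (fun i => HF (projT2 (q1 i)) (proj2_sig U))) q1 q2 eq'.
    exists h; split; first by split.
    move=> h'; exact (hu h').
  + move=> W [S c]; apply (Cterm (sval W)); by exists (embed_sobj S).
  + move=> W S X c cX.
    exact (Ccop _ (embed_sobj S) (fun i => embed_sobj (X i)) c cX).
- move=> W; exists (@sterm (subcat F) W).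
  change (colors C (sval W)); apply/hc; exact (proj2_sig W).
- move=> V S; split.
  + move=> c.
    have hV : F V by apply/hc; apply: Cterm; by exists S.
    exists hV, (lift_sobj hV S); split; last exact (siso_refl S).
    apply: (Ciso _ _ _ _ c); exact (siso_refl S).
  + move=> [hV [S' [c e]]]; exact (Ciso _ _ _ e c).
Qed.

Lemma part2_bwd (C : classes T) (C' : classes (subcat F)) :
  is_wIndSys C' -> one_color C' -> (forall V (S : sobj V), C V S <-> extE C' S) ->
  forall V, colors C V <-> F V.
Proof.
move=> [_ Cterm' _] oneC' eqv V; split.
- by move=> /eqv [hV _].
- move=> hV; apply/eqv.
  have [S0 c0] := oneC' (exist F V hV).
  exists hV, (@sterm (subcat F) (exist F V hV)); split.
  + apply: Cterm'; by exists S0.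
  + exact (siso_refl (sterm V)).
Qed.

End M.

Theorem mainTheorem8 (T : smallcat) (HT : orbital T) (F : ob T -> Prop)
    (HF : is_family F) :
  (forall C' : classes (subcat F),
      is_wIndSys C' -> one_color C' -> is_wIndSys (extE C')) /\
  (forall C : classes T, is_wIndSys C ->
     ((forall V, colors C V <-> F V) <->
      exists C' : classes (subcat F),
        [/\ is_wIndSys C', one_color C' &
            forall V (S : sobj V), C V S <-> extE C' S])).
Proof.
split; first exact: (ext_wind HF).
move=> C wC; split; first exact: (part2_fwd HF wC).
move=> [C' [wC' oneC' eqv]]; exact: (part2_bwd wC' oneC' eqv).
Qed.
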